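(* Consider the following slotted system. There are $N\ge2$ users and slots $t=1,\dots,T$. In each slot the BS schedules one user according to a scheduling algorithm $\pi$. Here $\pi$ may be randomized, and its choice in slot $t$ may depend on the adversary's actions in slots before $t$. An adversary uses a blocking matrix $\sigma\in\{0,1\}^{N\times T}$, where $\sigma_i(t)=0$ means user $i$'s channel is blocked in slot $t$. Feasibility means $\sum_{i,t}(1-\sigma_i(t))\le\alpha T$ and at most one user is blocked per slot, where $0<\alpha<1$. The ages satisfy $a_i(1)=1$ and $a_i(t+1)=1$ if user $i$ is scheduled in slot $t$ and $\sigma_i(t)=1$, and $a_i(t+1)=a_i(t)+1$ otherwise. Let $\Delta^{\pi,\sigma}=\frac1T\sum_{t=1}^T\frac1N\sum_{i=1}^N\mathbb{E}[a_i(t)]$ and $\Delta^*(T)=\sup_{\sigma}\inf_{\pi}\Delta^{\pi,\sigma}$, where $\sigma$ ranges over feasible blocking matrices. Let ''unif'' denote the algorithm that in each slot independently schedules a uniformly random user. Then, with $T\to\infty$ over values with $\alpha T\in\mathbb{Z}$, $$\limsup_{T\to\infty}\frac{\sup_{\sigma}\Delta^{\mathrm{unif},\sigma}}{\Delta^*(T)}\le\frac{1}{\alpha^2}.$$ That is, uniform scheduling is asymptotically $\frac1{\alpha^2}$-optimal.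
   Context: The expectation is over the scheduling randomness. *)

(* Defs.v *)
From HB Require Import structures.
From mathcomp Require Import all_boot all_order all_algebra.
From mathcomp Require Import boolp classical_sets reals.
Set Implicit Arguments. Unset Strict Implicit. Unset Printing Implicit Defensive.
Import Order.TTheory GRing.Theory Num.Theory.
Local Open Scope ring_scope.
Local Open Scope classical_set_scope.

(* Blocking matrix sigma : 'M[bool]_(N,T); sigma i t = true means sigma_i(t) = 1
   (user i NOT blocked in slot t), false means blocked.  Slots are 0-indexed:
   slot t : 'I_T corresponds to the paper's slot t+1. *)

Section Model.
Variables (R : realType) (N T : nat).

Definition blocking := 'M[bool]_(N, T).

Definition feasible (alpha : R) (sigma : blocking) : Prop :=
  (#|[set p : 'I_N * 'I_T | ~~ sigma p.1 p.2]|%:R <= alpha * T%:R) /\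
  (forall t : 'I_T, (#|[set i : 'I_N | ~~ sigma i t]| <= 1)%N).

(* sigma_i(t) read on nat indices (only indices < T are ever used) *)
Definition sig_at (sigma : blocking) (i : 'I_N) (t : nat) : bool :=
  if insub t is Some t' then sigma i t' else true.

Definition sched_at (s : 'I_T -> 'I_N) (t : nat) : option 'I_N :=
  if insub t is Some t' then Some (s t') else None.

(* age a_i(t+1) (0-indexed t): a_i at index 0 is 1; reset to 1 after a
   successful (scheduled and unblocked) slot, otherwise increment. *)
Fixpoint age (sigma : blocking) (s : 'I_T -> 'I_N) (i : 'I_N) (t : nat) : nat :=
  match t with
  | 0 => 1
  | t'.+1 => if (sched_at s t' == Some i) && sig_at sigma i t' then 1
             else (age sigma s i t').+1
  end.

Definition avg_age (sigma : blocking) (s : 'I_T -> 'I_N) : R :=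
  (T%:R)^-1 * \sum_(t < T) ((N%:R)^-1 * \sum_(i < N) (age sigma s i t)%:R).

(* deterministic adaptive policy: slot t's choice is a function of the
   blocking matrix, required to depend only on the columns of slots < t *)
Definition det_policy := 'I_T -> blocking -> 'I_N.

Definition causal (p : det_policy) : Prop :=
  forall (t : 'I_T) (s1 s2 : blocking),
    (forall (i : 'I_N) (u : 'I_T), (u < t)%N -> s1 i u = s2 i u) ->
    p t s1 = p t s2.

(* randomized policy: a finite probability mixture of causal deterministic
   policies *)
Definition rand_policy := seq (R * det_policy).

Definition valid_policy (rp : rand_policy) : Prop :=
  (forall wp, wp \in rp -> 0 <= wp.1) /\
  \sum_(wp <- rp) wp.1 = 1 /\
  (forall wp, wp \in rp -> causal wp.2).

Definition Delta (rp : rand_policy) (sigma : blocking) : R :=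
  \sum_(wp <- rp) wp.1 * avg_age sigma (fun t => wp.2 t sigma).

(* Delta^{unif,sigma}: each slot independently uniform, i.e. the schedule
   is uniform over all N^T schedules *)
Definition Delta_unif (sigma : blocking) : R :=
  \sum_(s : {ffun 'I_T -> 'I_N}) ((N ^ T)%:R)^-1 * avg_age sigma s.

Definition Delta_star (alpha : R) : R :=
  sup [set x : R | exists sigma, feasible alpha sigma /\
        x = inf [set y : R | exists rp, valid_policy rp /\ y = Delta rp sigma]].

Definition worst_unif (alpha : R) : R :=
  sup [set x : R | exists sigma, feasible alpha sigma /\ x = Delta_unif sigma].

End Model.

(* Main.v *)
Require Import Defs.
From HB Require Import structures.
From mathcomp Require Import all_boot all_order all_algebra.
From mathcomp Require Import boolp classical_sets reals.
From mathcomp Require Import ring lra zify.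
Import Order.TTheory GRing.Theory Num.Theory.
Local Open Scope ring_scope.



Section Ages.
Variables (N T : nat).
Implicit Types (sigma : blocking N T) (s : 'I_T -> 'I_N) (i : 'I_N).

Lemma age_le sigma s i t : (age sigma s i t <= t.+1)%N.
Proof.
elim: t => [//|t IH] /=; case: ifP => // _.
Qed.

Lemma age_local sigma s1 s2 i t :
  (forall u : 'I_T, (u < t)%N -> s1 u = s2 u) -> age sigma s1 i t = age sigma s2 i t.
Proof.
elim: t => [//|t IH] H /=.
rewrite IH; last by move=> u ut; apply: H; apply: ltnW.
rewrite /sched_at; case: insubP => [u _ ut|//].
by rewrite H // ut.
Qed.

Lemma age_step sigma s i (t : 'I_T) :
  age sigma s i t.+1 = if (s t == i) && sigma i t then 1%N else (age sigma s i t).+1.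
Proof.
by rewrite /= /sched_at /sig_at valK.
Qed.

Definition swp (j j' x : 'I_N) := if x == j then j' else if x == j' then j else x.

Lemma swpK j j' : involutive (swp j j').
Proof.
move=> x; rewrite /swp.
case: (eqVneq x j) => [->|xj]; first by rewrite eqxx; case: (eqVneq j' j).
case: (eqVneq x j') => [->|xj']; first by rewrite eqxx.
by rewrite (negPf xj) (negPf xj').
Qed.

Lemma swp_eq j j' x : (swp j j' x == j') = (x == j).
Proof.
have E : j' = swp j j' j by rewrite /swp eqxx.
by rewrite [X in _ == X]E (inj_eq (can_inj (swpK j j'))).
Qed.

Lemma indep (R : numFieldType) (t : 'I_T) (g : {ffun 'I_T -> 'I_N} -> R) (h : 'I_N -> R) :
  (forall f f' : {ffun 'I_T -> 'I_N}, (forall u, u != t -> f u = f' u) -> g f = g f') ->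
  N%:R * \sum_(f : {ffun 'I_T -> 'I_N}) h (f t) * g f = (\sum_j h j) * \sum_f g f.
Proof.
move=> Hg.
pose A j := \sum_(f : {ffun 'I_T -> 'I_N} | f t == j) g f.
have AE j j' : A j' = A j.
  pose phi (f : {ffun 'I_T -> 'I_N}) := [ffun u => if u == t then swp j j' (f u) else f u].
  have phiK : involutive phi.
    by move=> f; apply/ffunP => u; rewrite !ffunE; case: eqP => // _; rewrite swpK.
  rewrite /A (reindex_inj (can_inj phiK)) /=.
  apply: eq_big => f; first by rewrite ffunE eqxx swp_eq.
  move=> _; apply: Hg => u ut; by rewrite ffunE (negPf ut).
have S1 : \sum_(f : {ffun 'I_T -> 'I_N}) h (f t) * g f = \sum_j h j * A j.
  rewrite (partition_big (fun f : {ffun 'I_T -> 'I_N} => f t) xpredT) //=.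
  apply: eq_bigr => j _; rewrite /A mulr_sumr; apply: eq_bigr => f /eqP -> //.
have S2 : \sum_f g f = \sum_j A j.
  by rewrite (partition_big (fun f : {ffun 'I_T -> 'I_N} => f t) xpredT).
rewrite S1 S2 mulr_sumr mulr_suml; apply: eq_bigr => j _.
rewrite (eq_bigr (fun _ => A j)); last by move=> j' _; apply: AE.
rewrite sumr_const card_ord -mulr_natl; ring.
Qed.
End Ages.



Section Unif.
Variables (R : realType) (N T : nat) (sigma : blocking N T).

Definition E i t : R := \sum_(f : {ffun 'I_T -> 'I_N}) (age sigma f i t)%:R.
Definition K : R := (N ^ T)%:R.

Lemma sum_const_ffun (c : R) : \sum_(f : {ffun 'I_T -> 'I_N}) c = K * c.
Proof. by rewrite sumr_const card_ffun !card_ord -mulr_natl. Qed.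

Lemma K_ge0 : 0 <= K. Proof. by rewrite /K ler0n. Qed.

Lemma E_le i t : E i t <= K * t.+1%:R.
Proof.
rewrite /E -sum_const_ffun; apply: ler_sum => f _; rewrite ler_nat; exact: age_le.
Qed.

Lemma E_step i (t : 'I_T) :
  N%:R * E i t.+1 = N%:R * K + N%:R * E i t - (sigma i t)%:R * E i t.
Proof.
pose b j : R := ((j == i) && sigma i t)%:R.
have H (f : {ffun 'I_T -> 'I_N}) : (age sigma f i t.+1)%:R = 1 + (age sigma f i t)%:R - b (f t) * (age sigma f i t)%:R :> R.
  rewrite age_step /b; case: (_ && _) => /=; rewrite ?mul1r ?mul0r ?addrK ?subr0 //.
  by rewrite mulrS.
rewrite /E (eq_bigr _ (fun f _ => H f)) sumrB big_split /= sum_const_ffun mulr1.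
have Hloc : forall f f' : {ffun 'I_T -> 'I_N}, (forall u, u != t -> f u = f' u) ->
    (age sigma f i t)%:R = (age sigma f' i t)%:R :> R.
  move=> f f' Hf; congr (_%:R); apply: age_local => u ut; apply: Hf.
  by apply/negP => /eqP E0; rewrite E0 ltnn in ut.
have Hi := @indep N T R t (fun f => (age sigma f i t)%:R) b Hloc.
have Hb : \sum_j b j = (sigma i t)%:R.
  rewrite (bigD1 i) //= /b eqxx /= big1 ?addr0 // => j /negPf -> //.
rewrite Hb in Hi; rewrite -Hi; ring.
Qed.

Lemma S_bound : (0 < N)%N ->
  (forall t : 'I_T, (#|[set i : 'I_N | ~~ sigma i t]| <= 1)%N) ->
  forall t, (t <= T)%N -> \sum_i E i t <= K * ((N%:R)^+2 + t%:R + 1).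
Proof.
move=> N0 Hblk; elim=> [|t IH] tT.
  rewrite /E /= (eq_bigr (fun _ => K)); last by move=> i _; rewrite sum_const_ffun mulr1.
  rewrite sumr_const card_ord -[K *+ N]mulr_natr addr0.
  have Nge : (N%:R : R) <= (N%:R)^+2 + 1.
    by nra.
  by apply: ler_wpM2l; [exact: K_ge0|].
have tT' : (t < T)%N by [].
have IH' := IH (ltnW tT').
pose t' := Ordinal tT'.
set Y := \sum_i E i t in IH'.
set X := \sum_i E i t.+1.
set Z := \sum_i (sigma i t')%:R * E i t.
have HX : N%:R * X = N%:R * N%:R * K + N%:R * Y - Z.
  rewrite /X mulr_sumr (eq_bigr _ (fun i _ => E_step i t')) /=.
  rewrite sumrB big_split /= sumr_const card_ord -mulr_sumr -[_ *+ N]mulr_natr /Y /Z; ring.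
have HYZ : Y - Z <= K * t.+1%:R.
  apply: (@le_trans _ _ (\sum_i (~~ sigma i t')%:R * (K * t.+1%:R))).
    rewrite /Y /Z -sumrB; apply: ler_sum => i _.
    case: (sigma i t') => /=; first by rewrite mul1r subrr mul0r.
    by rewrite mul0r subr0 mul1r; exact: E_le.
  rewrite -mulr_suml -natr_sum.
  have -> : (\sum_i (~~ sigma i t' : nat))%N = #|[set i | ~~ sigma i t']|.
    rewrite -sum1_card [RHS]big_mkcond /=; apply: eq_bigr => i _; rewrite inE.
    by case: (sigma i t').
  have := Hblk t'; rewrite -(ler_nat R) => Hc.
  rewrite -[X in _ <= X]mul1r; apply: ler_wpM2r => //.
  by apply: mulr_ge0; [exact: K_ge0|rewrite ler0n].
have Nge1 : (1 : R) <= N%:R by rewrite (ler_nat R 1).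
have Kge := K_ge0.
have hint : 0 <= (N%:R - 1) * (K * ((N%:R)^+2 + t%:R + 1) - Y).
  apply: mulr_ge0; lra.
have HNX : N%:R * X <= N%:R * (K * ((N%:R)^+2 + t%:R + 1)).
  rewrite HX; move: HYZ hint; rewrite -addn1 natrD /=; nra.
rewrite ler_pM2l ?ltr0n // in HNX.
apply: (le_trans HNX); apply: ler_wpM2l => //.
rewrite mulrS; lra.
Qed.

Lemma tri (c : R) n : 2 * \sum_(t < n) (c + t%:R + 1) = 2 * n%:R * c + n%:R * (n%:R + 1).
Proof.
elim: n => [|n IH]; first by rewrite big_ord0; ring.
rewrite big_ord_recr /= mulrDr IH -natr1; ring.
Qed.

Lemma sum_avg : \sum_(f : {ffun 'I_T -> 'I_N}) avg_age R sigma f =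
   T%:R^-1 * N%:R^-1 * \sum_(t < T) \sum_i E i t.
Proof.
rewrite /avg_age -mulr_sumr -mulrA; congr (_ * _).
rewrite exchange_big /= mulr_sumr; apply: eq_bigr => t _.
rewrite -mulr_sumr; congr (_ * _); rewrite exchange_big //=.
Qed.

Lemma unif_bound : (0 < N)%N -> (0 < T)%N ->
  (forall t : 'I_T, (#|[set i : 'I_N | ~~ sigma i t]| <= 1)%N) ->
  Delta_unif R sigma <= N%:R + (T%:R + 1) / (2 * N%:R).
Proof.
move=> N0 T0 Hblk.
have Kgt : 0 < K by rewrite /K ltr0n expn_gt0 N0.
rewrite /Delta_unif -mulr_sumr sum_avg.
apply: (@le_trans _ _ (K^-1 * (T%:R^-1 * N%:R^-1 *
           \sum_(t < T) (K * ((N%:R)^+2 + t%:R + 1))))).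
  apply: ler_wpM2l; first by rewrite invr_ge0 ltW.
  apply: ler_wpM2l; first by rewrite mulr_ge0 // invr_ge0 ler0n.
  apply: ler_sum => t _; apply: S_bound => //; exact: ltnW.
rewrite -mulr_sumr.
set s := \sum_(t < T) _.
have KK : K != 0 by rewrite gt_eqF.
rewrite mulrCA mulKf //.
rewrite /s.
have H2 := tri ((N%:R)^+2) T.
have -> : \sum_(t < T) ((N%:R)^+2 + t%:R + 1) =
   (2 * T%:R * (N%:R)^+2 + T%:R * (T%:R + 1)) / 2 :> R.
  by rewrite -H2; field.
have TN0 : (T%:R : R) != 0 by rewrite pnatr_eq0 -lt0n.
have NN0 : (N%:R : R) != 0 by rewrite pnatr_eq0 -lt0n.
rewrite le_eqVlt; apply/orP; left; apply/eqP; field.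
by rewrite NN0 TN0.
Qed.
End Unif.



Lemma card_cset (T : finType) (P : pred T) : #|[set x | P x]%classic| = #|[set x | P x]|.
Proof.
apply: eq_card => x; rewrite [RHS]inE; apply/idP/idP => [/set_mem //|Px]; exact: mem_set.
Qed.

Section Lower.
Variables (R : realType) (N T k : nat) (i0 : 'I_N).
Hypothesis kT : (k <= T)%N.

Definition sigma0 : blocking N T := \matrix_(i, t) ~~ ((i == i0) && (t < k)%N).

Lemma age0 s t : (t <= k)%N -> age sigma0 s i0 t = t.+1.
Proof.
elim: t => [//|t IH] tk /=.
rewrite IH ?(ltnW tk) //.
have -> : sig_at sigma0 i0 t = false.
  rewrite /sig_at; case: insubP => [u _ ut|/negP []]; last by apply: leq_trans tk kT.
  by rewrite mxE eqxx ut tk.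
by rewrite andbF.
Qed.

Lemma feas0 (alpha : R) : k%:R <= alpha * T%:R -> feasible alpha sigma0.
Proof.
move=> Hk; split.
  apply: le_trans Hk; rewrite ler_nat card_cset.
  have -> : [set p : 'I_N * 'I_T | ~~ sigma0 p.1 p.2] =
      finset.setX [set i0] [set t : 'I_T | (t < k)%N].
    by apply/setP => -[i t]; rewrite !inE mxE negbK.
  rewrite cardsX cards1 mul1n.
  have -> : [set t : 'I_T | (t < k)%N] = [set widen_ord kT j | j in 'I_k].
    apply/setP => t; rewrite !inE; apply/idP/imsetP.
      by move=> tk; exists (Ordinal tk) => //; apply: val_inj.
    by case=> j _ ->; rewrite /= ltn_ord.
  by apply: leq_trans (leq_imset_card _ _) _; rewrite card_ord.
move=> t; rewrite card_cset -(cards1 i0); apply: subset_leq_card; apply/fintype.subsetP => i.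
by rewrite !inE mxE negbK => /andP [].
Qed.

Lemma avg0 (s : 'I_T -> 'I_N) : (0 < T)%N ->
  T%:R^-1 * N%:R^-1 * (k%:R * (k%:R + 1) / 2) <= avg_age R sigma0 s.
Proof.
move=> T0.
rewrite /avg_age -mulrA; apply: ler_wpM2l; first by rewrite invr_ge0 ler0n.
rewrite -mulr_sumr; apply: ler_wpM2l; first by rewrite invr_ge0 ler0n.
apply: (@le_trans _ _ (\sum_(t < T) (age sigma0 s i0 t)%:R)); last first.
  apply: ler_sum => t _; rewrite (bigD1 i0) //= lerDl; apply: sumr_ge0 => i _.
  by rewrite ler0n.
have H2 := tri R 0 k.
have -> : k%:R * (k%:R + 1) / 2 = \sum_(t < k) (0 + t%:R + 1) :> R.
  by rewrite mulr0 add0r in H2; rewrite -H2; field.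
rewrite (_ : \sum_(t < k) (0 + t%:R + 1 : R) = \sum_(t < T | (t < k)%N) (0 + t%:R + 1)); last first.
  exact: (big_ord_widen T (fun t : nat => (0 + t%:R + 1 : R)) kT).
rewrite big_mkcond /=; apply: ler_sum => t _.
case: ifP => tk; last by rewrite ler0n.
by rewrite age0 ?(ltnW tk) // add0r -natr1.
Qed.
End Lower.



Lemma avg_ge0 (R : realType) N T (sigma : blocking N T) s : 0 <= avg_age R sigma s.
Proof.
rewrite /avg_age; apply: mulr_ge0; first by rewrite invr_ge0 ler0n.
apply: sumr_ge0 => t _; apply: mulr_ge0; first by rewrite invr_ge0 ler0n.
by apply: sumr_ge0 => i _; rewrite ler0n.
Qed.

Lemma avg_le (R : realType) N T (sigma : blocking N T) s :
  avg_age R sigma s <= T%:R^-1 * \sum_(t < T) (N%:R^-1 * \sum_(i < N) (T%:R : R)).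
Proof.
rewrite /avg_age; apply: ler_wpM2l; first by rewrite invr_ge0 ler0n.
apply: ler_sum => t _; apply: ler_wpM2l; first by rewrite invr_ge0 ler0n.
apply: ler_sum => i _; rewrite ler_nat; apply: leq_trans (age_le _ _ _ _ _ _) _.
exact: ltn_ord.
Qed.

Lemma Delta_ge0 (R : realType) N T (rp : rand_policy R N T) sigma :
  valid_policy rp -> 0 <= Delta rp sigma.
Proof.
move=> [Hw _]; rewrite /Delta big_seq; apply: sumr_ge0 => wp wpin.
by apply: mulr_ge0; [exact: Hw | exact: avg_ge0].
Qed.

Definition rp0 (R : realType) N T (i0 : 'I_N) : rand_policy R N T := [:: (1, fun _ _ => i0)].

Lemma rp0_valid (R : realType) N T (i0 : 'I_N) : valid_policy (rp0 R N T i0).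
Proof.
split; first by move=> wp; rewrite inE => /eqP -> /=; exact: ler01.
split; first by rewrite big_cons big_nil addr0.
by move=> wp; rewrite inE => /eqP -> t s1 s2 _.
Qed.

Lemma Delta_rp0 (R : realType) N T (i0 : 'I_N) sigma :
  Delta (rp0 R N T i0) sigma = avg_age R sigma (fun _ => i0).
Proof. by rewrite /Delta big_cons big_nil /= mul1r addr0. Qed.

Theorem theorem3 (R : realType) (N : nat) (alpha : R) :
  (2 <= N)%N -> 0 < alpha -> alpha < 1 ->
  forall eps : R, 0 < eps ->
  exists T0 : nat, forall T : nat, (T0 <= T)%N ->
    (exists k : nat, alpha * T%:R = k%:R) ->
    worst_unif N T alpha / Delta_star N T alpha <= alpha ^- 2 + eps.
Proof.
move=> N2 a0 a1 eps e0.
have N0 : (0 < N)%N by apply: leq_trans N2.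
pose i0 : 'I_N := Ordinal N0.
pose x0 : R := 2 * (N%:R)^+2 / (eps * alpha^+2).
have x0ge : 0 <= x0.
  by rewrite /x0 divr_ge0 // ?mulr_ge0 ?exprn_ge0 ?ler0n // ltW.
exists (Num.Def.archi_bound x0).+1 => T TT0 [k Hk].
have T0 : (0 < T)%N by apply: leq_trans TT0.
have Tbig : x0 < T%:R.
  apply: (lt_le_trans (archi_boundP x0ge)); rewrite ler_nat; exact: ltnW.
have tpos : (0 : R) < T%:R by rewrite ltr0n.
have npos : (0 : R) < N%:R by rewrite ltr0n.
have kT : (k <= T)%N.
  rewrite -(ler_nat R) -Hk; apply: ltW; rewrite gtr_pMl //.
have kpos : (0 : R) < k%:R by rewrite -Hk mulr_gt0.
pose L : R := T%:R^-1 * N%:R^-1 * (k%:R * (k%:R + 1) / 2).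
pose U : R := N%:R + (T%:R + 1) / (2 * N%:R).
have Lpos : 0 < L.
  rewrite /L !mulr_gt0 ?invr_gt0 // ?addr_gt0 //.
have Uge : 0 <= U by rewrite /U addr_ge0 ?ler0n // divr_ge0 ?mulr_ge0 ?addr_ge0 ?ler0n.
have HW : worst_unif N T alpha <= U.
  rewrite /worst_unif; apply: ge_sup.
    exists (Delta_unif R (const_mx true : blocking N T)), (const_mx true); split => //.
    split.
      rewrite card_cset.
      have -> : [set p : 'I_N * 'I_T | ~~ (const_mx true : blocking N T) p.1 p.2] = finset.set0.
        by apply/setP => p; rewrite !inE mxE.
      by rewrite cards0 mulr_ge0 // ltW.
    move=> t; rewrite card_cset.
    have -> : [set i : 'I_N | ~~ (const_mx true : blocking N T) i t] = finset.set0.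
      by apply/setP => p; rewrite !inE mxE.
    by rewrite cards0.
  move=> x [sigma [[_ H2] ->]]; apply: unif_bound => // t.
  by have := H2 t; rewrite card_cset.
have HD : L <= Delta_star N T alpha.
  rewrite /Delta_star.
  apply: (@le_trans _ _ (inf [set y : R | exists rp, valid_policy rp /\
                    y = Delta rp (sigma0 N T k i0)])).
    apply: lb_le_inf.
      by exists (Delta (rp0 R N T i0) (sigma0 N T k i0)), (rp0 R N T i0); split => //; exact: rp0_valid.
    move=> y [rp [[Hw [Hs _]] ->]].
    rewrite /Delta; apply: (@le_trans _ _ (\sum_(wp <- rp) wp.1 * L)).
      by rewrite -mulr_suml Hs mul1r.
    rewrite big_seq [X in _ <= X]big_seq; apply: ler_sum => wp wpin.
    apply: ler_wpM2l; first exact: Hw.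
    exact: avg0.
  apply: ub_le_sup; last first.
    by exists (sigma0 N T k i0); split => //; apply: feas0 => //; rewrite Hk.
  exists (T%:R^-1 * \sum_(t < T) (N%:R^-1 * \sum_(i < N) (T%:R : R))).
  move=> x [sigma [_ ->]].
  apply: (@le_trans _ _ (Delta (rp0 R N T i0) sigma)); last by rewrite Delta_rp0 avg_le.
  apply: ge_inf; last by exists (rp0 R N T i0); split => //; exact: rp0_valid.
  exists 0 => y [rp [Hv ->]]; exact: Delta_ge0.
have Dpos : 0 < Delta_star N T alpha by apply: lt_le_trans HD.
apply: (@le_trans _ _ (U / Delta_star N T alpha)).
  by apply: ler_wpM2r => //; rewrite invr_ge0 ltW.
apply: (@le_trans _ _ (U / L)).
  by apply: ler_wpM2l => //; rewrite lef_pV2 ?posrE.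
rewrite ler_pdivrMr //.
have ea : 0 < eps * alpha ^+ 2 by rewrite mulr_gt0 // exprn_gt0.
move: Tbig; rewrite /x0 ltr_pdivrMr // => Tbig.
rewrite /U /L -Hk.
move: Tbig tpos npos; set t := T%:R; set n := N%:R => Tbig tpos npos.
have nn0 : n != 0 by rewrite gt_eqF.
have tn0 : t != 0 by rewrite gt_eqF.
have an0 : alpha != 0 by rewrite gt_eqF.
have -> : n + (t + 1) / (2 * n) = (2 * n ^+ 2 + t + 1) / (2 * n).
  by field; rewrite nn0.
have -> : (alpha ^- 2 + eps) * (t^-1 / n * (alpha * t * (alpha * t + 1) / 2)) =
    (t + alpha^-1 + eps * alpha ^+ 2 * t + eps * alpha) / (2 * n).
  by field; rewrite nn0 tn0 an0.
rewrite ler_pM2r ?invr_gt0 ?mulr_gt0 //.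
have a1' : 1 <= alpha^-1 by rewrite invf_ge1 // ltW.
have ea' : 0 <= eps * alpha by rewrite mulr_ge0 // ltW.
lra.
Qed.
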